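(* Let $X,Y$ be finite sets with $Y\ne\emptyset$, and let $A\in\mathbb{Z}^{X\times Y}$ be an integer matrix with no all-zero columns. Then there exist a partition $Y=\bigcup_{i=1}^kS_i$ into nonempty sets, rows $x_1,\dots,x_k\in X$ and nonzero integers $b_1,\dots,b_k\in\mathbb{Z}\setminus\{0\}$ such that (i) for every $1\le i\le k$, $A(x_i,y)=b_i$ for all $y\in S_i$; and (ii) for every $\delta>0$, every $x\in X$ and every $b\in\mathbb{Z}\setminus\{0\}$, the number of indices $1\le i\le k$ with $$\Pr_{y\in S_i}\bigl[A(x,y)=b\bigr]\ge\delta$$ (with $y$ uniform in $S_i$) is at most $(\log|Y|+1)/\delta$, where $\log$ is the natural logarithm. *)

(* Defs.v *)
From mathcomp Require Import all_boot all_algebra.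
From Stdlib Require Import Reals.

Definition prob_in {X Y : finType} (A : X -> Y -> int) (S : {set Y})
  (x : X) (b : int) : R :=
  Rdiv (INR #|[set y in S | A x y == b]|) (INR #|S|).

Definition Rleb (a b : R) : bool := if Rle_dec a b then true else false.

(* Main.v *)
Require Import Defs.
From mathcomp Require Import all_boot all_algebra.
From Stdlib Require Import Reals Lra.
From mathcomp Require Import zify.
Definition Phi (n : nat) : R := match n with 0 => 0%R | _ => (ln (INR n) + 1)%R end.

Lemma ln_le_xm1 (z : R) : (0 < z)%R -> (ln z <= z - 1)%R.
Proof. move=> hz; have := exp_ineq1_le (ln z); rewrite exp_ln //; lra. Qed.

Lemma ln_mono (a b : R) : (0 < a)%R -> (a <= b)%R -> (ln a <= ln b)%R.
Proof.
move=> ha hab; case: (Rle_lt_or_eq_dec _ _ hab) => h.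
  by apply: Rlt_le; apply: ln_increasing.
by rewrite h; apply: Rle_refl.
Qed.
Arguments ln_mono {a b}.

Lemma INR_pos n : (0 < n)%N -> (0 < INR n)%R.
Proof. by case: n => // n _; apply: lt_0_INR; apply/ltP. Qed.
Arguments INR_pos {n}.

Lemma INR_leq m n : (m <= n)%N -> (INR m <= INR n)%R.
Proof. by move/leP; apply: le_INR. Qed.
Arguments INR_leq {m n}.

Lemma ln_INR_ge0 n : (0 < n)%N -> (0 <= ln (INR n))%R.
Proof.
move=> hn; rewrite -ln_1; apply: ln_mono; first lra.
by have := INR_leq hn.
Qed.

Lemma Phi_ge0 n : (0 <= Phi n)%R.
Proof. case: n => [|n]; rewrite /Phi; first lra. by have := @ln_INR_ge0 n.+1 isT; lra. Qed.

Lemma Phi_mono m n : (m <= n)%N -> (Phi m <= Phi n)%R.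
Proof.
case: m => [|m] hmn; first exact: Phi_ge0.
case: n hmn => [|n] // hmn; rewrite /Phi.
have := ln_mono (INR_pos (isT : (0 < m.+1)%N)) (INR_leq hmn); lra.
Qed.

Arguments Phi_mono {m n}.
Lemma Phi_le_lnY n N : (0 < N)%N -> (n <= N)%N -> (Phi n <= ln (INR N) + 1)%R.
Proof.
move=> hN hn; apply: Rle_trans (Phi_mono hn) _.
case: N hN {hn} => // N _; rewrite /Phi; lra.
Qed.

Lemma phi_step (t c s : nat) (d : R) : (0 < d)%R -> (c <= t)%N -> (t <= s)%N ->
  (d <= INR c / INR s)%R -> (d + Phi (t - c) <= Phi t)%R.
Proof.
move=> hd hct hts hds.
have hc : (0 < c)%N.
  case: c {hct} hds => // hds; rewrite /= /Rdiv Rmult_0_l in hds; lra.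
have ht : (0 < t)%N by apply: leq_trans hct.
have hs : (0 < s)%N by apply: leq_trans hts.
have hS := INR_pos hs; have hT := INR_pos ht; have hC := INR_pos hc.
have hct' : (d <= INR c / INR t)%R.
  apply: Rle_trans hds _; rewrite /Rdiv; apply: Rmult_le_compat_l; first lra.
  apply: Rinv_le_contravar => //; exact: INR_leq.
have hle1 : (INR c / INR t <= 1)%R.
  have := INR_leq hct => h; rewrite /Rdiv.
  apply: (Rmult_le_reg_r (INR t)) => //.
  rewrite Rmult_assoc Rinv_l; lra.
case E: (t - c)%N => [|u].
  have -> : Phi 0 = 0%R by [].
  case: t ht hT hct' hle1 {hct hts E} => // t _ hT hct' hle1; rewrite /Phi.
  have := @ln_INR_ge0 t.+1 isT; lra.
have hu : (0 < INR u.+1)%R by apply: INR_pos.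
have eU : INR u.+1 = (INR t - INR c)%R.
  by rewrite -E -minus_INR; [| apply/leP].
rewrite /Phi.
case: t ht hT hct' hle1 eU {hct hts E} => // t _ hT hct' hle1 eU.
have -> : INR u.+1 = (INR t.+1 * (INR u.+1 / INR t.+1))%R.
  by field; lra.
rewrite ln_mult //; last by apply: Rdiv_lt_0_compat.
have := ln_le_xm1 _ (Rdiv_lt_0_compat _ _ hu hT).
have : (INR u.+1 / INR t.+1 - 1 = - (INR c / INR t.+1))%R.
  rewrite eU; field; lra.
lra.
Qed.


Lemma RlebP (a b : R) : Rleb a b = true <-> (a <= b)%R.
Proof. by rewrite /Rleb; case: Rle_dec. Qed.

Definition Inv (X Y : finType) (A : X -> Y -> int) (R0 : {set Y})
  (s : seq ({set Y} * X * int)) : Prop :=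
 [/\ forall t : {set Y} * X * int, t \in s -> [/\ t.1.1 != set0, t.1.1 \subset R0, t.2 != (0 : int) &
        forall y, y \in t.1.1 -> A t.1.2 y = t.2],
     pairwise (fun t u : {set Y} * X * int => [disjoint t.1.1 & u.1.1]) s,
     \bigcup_(t <- s) (t.1.1 : {set Y}) = R0 &
     forall d, (0 < d)%R -> forall (x : X) (b : int), b != (0 : int) ->
       (d * INR (count (fun t => Rleb d (prob_in A t.1.1 x b)) s)
         <= Phi #|[set y in R0 | A x y == b]|)%R ].

Arguments Inv {X Y}.
Lemma greedy (X Y : finType) (A : X -> Y -> int)
  (hcol : forall y : Y, exists x : X, A x y != (0 : int)) :
  forall n (R0 : {set Y}), (#|R0| <= n)%N -> exists s, Inv A R0 s.
Proof.
elim=> [|n IH] R0 hR; case: (set_0Vmem R0) => [->|[y0 hy0]].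
- exists [::]; split => //; first by rewrite big_nil.
  by move=> d hd x b _ /=; rewrite Rmult_0_r; apply: Phi_ge0.
- by move: hR; rewrite leqn0 => /eqP/cards0_eq E; rewrite E inE in hy0.
- exists [::]; split => //; first by rewrite big_nil.
  by move=> d hd x b _ /=; rewrite Rmult_0_r; apply: Phi_ge0.
have [x1 hx1] := hcol y0.
pose P := fun p : X * Y => (p.2 \in R0) && (A p.1 p.2 != 0).
pose F := fun p : X * Y => #|[set y in R0 | A p.1 y == A p.1 p.2]|.
have hP0 : P (x1, y0) by rewrite /P /= hy0 hx1.
case: (@arg_maxnP _ _ P F hP0) => [[xm ym]] /andP[/= hym hAm] hmax.
set b0 := A xm ym.
set S := [set y in R0 | A xm y == b0].
have hmaxS : forall (x : X) (b : int), b != (0:int) -> (#|[set y in R0 | A x y == b]| <= #|S|)%N.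
  move=> x b hb; case: (set_0Vmem [set y in R0 | A x y == b]) => [->|[y]].
    by rewrite cards0.
  rewrite inE => /andP[hy /eqP hAy].
  have := hmax (x, y); rewrite /P /F /= hy hAy hb => /(_ isT).
  by rewrite -hAy.
have hSR : S \subset R0 by apply/subsetP => y; rewrite inE => /andP[].
have hymS : ym \in S by rewrite inE hym eqxx.
set R' := R0 :\: S.
have hR' : (#|R'| <= n)%N.
  have := cardsID S R0; have -> : R0 :&: S = S by apply/setIidPr.
  have : (0 < #|S|)%N by apply/card_gt0P; exists ym.
  move: hR; rewrite -/R'; lia.
have [s' [i1 i2 i3 i4]] := IH R' hR'.
exists ((S, xm, b0) :: s'); split.
- move=> t; rewrite inE => /orP[/eqP -> /=|ht].
    split => //; first by apply/set0Pn; exists ym.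
    by move=> y; rewrite inE => /andP[_ /eqP].
  have [j1 j2 j3 j4] := i1 t ht; split => //.
  by apply: subset_trans j2 _; apply: subsetDl.
- rewrite pairwise_cons i2 andbT; apply/allP => u hu /=.
  have [_ j2 _ _] := i1 u hu.
  rewrite disjoint_sym disjoints_subset; apply: subset_trans j2 _.
  by rewrite /R' setDE subsetIr.
- by rewrite big_cons i3 /R' -{1}(setIidPr hSR) setID.
- move=> d hd x b hb /=.
  set c := #|[set y in S | A x y == b]|.
  set t := #|[set y in R0 | A x y == b]|.
  set t' := #|[set y in R' | A x y == b]|.
  have et : t = (c + t')%N.
    rewrite /t /c /t' -(cardsID S [set y in R0 | A x y == b]).
    have e1 : [set y in R0 | A x y == b] :&: S = [set y in S | A x y == b].
      apply/setP => y; rewrite /S !inE.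
      by case: (y \in R0); case: (A x y == b); case: (A xm y == b0).
    have e2 : [set y in R0 | A x y == b] :\: S = [set y in R' | A x y == b].
      apply/setP => y; rewrite /R' /S !inE.
      by case: (y \in R0); case: (A x y == b); case: (A xm y == b0).
    by rewrite e1 e2.
  have := i4 d hd x b hb; rewrite -/t' => IHd.
  rewrite plus_INR Rmult_plus_distr_l.
  case E: (Rleb d (prob_in A S x b)).
  + move/RlebP: E => E; rewrite /prob_in -/c in E.
    have := phi_step (c + t')%N c #|S| d hd (leq_addr _ _) _ E.
    rewrite -et (hmaxS x b hb) => /(_ isT).
    have -> : (t - c = t')%N by rewrite et addKn.
    change (INR true) with 1%R; rewrite Rmult_1_r; lra.
  + apply: Rle_trans (Phi_mono (_ : (t' <= t)%N)); last by rewrite et leq_addl.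
    change (INR false) with 0%R; rewrite Rmult_0_r; lra.
Qed.

Lemma card_nth (T : Type) (d : T) (s : seq T) (P : pred T) :
  #|[set i : 'I_(size s) | P (nth d s i)]| = count P s.
Proof.
rewrite -sum1_count (big_nth d) big_mkord -sum1_card.
by apply: eq_bigl => i; rewrite inE.
Qed.

Theorem lemma4p3 (X Y : finType) (A : X -> Y -> int)
  (hY : (0 < #|Y|)%N)
  (hcol : forall y : Y, exists x : X, A x y != (0 : int)) :
  exists (k : nat) (S : 'I_k -> {set Y}) (xs : 'I_k -> X) (bs : 'I_k -> int),
    (* S_1, ..., S_k is a partition of Y into nonempty sets *)
    [/\ (forall i, S i != set0),
        (forall i j, i != j -> [disjoint S i & S j]),
        \bigcup_(i < k) S i = [set: Y],
    (* b_i nonzero, and (i) *)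
        (forall i, bs i != (0 : int) /\ forall y, y \in S i -> A (xs i) y = bs i) &
    (* (ii) *)
        forall (delta : R), (0 < delta)%R -> forall (x : X) (b : int), b != (0 : int) ->
          (INR #|[set i : 'I_k | Rleb delta (prob_in A (S i) x b)]|
             <= (ln (INR #|Y|) + 1) / delta)%R ].
Proof.
have [s [i1 i2 i3 i4]] := @greedy X Y A hcol _ [set: Y] (leqnn _).
have [y0 _] : exists y : Y, true by move/card_gt0P: hY => [y _]; exists y.
have [x0 _] := hcol y0.
pose d0 := (@set0 Y, x0, (0 : int)).
exists (size s), (fun i => (nth d0 s i).1.1), (fun i => (nth d0 s i).1.2),
  (fun i => (nth d0 s i).2); split.
- by move=> i; have [] := i1 _ (mem_nth d0 (ltn_ord i)).
- move=> i j hij; have hp := pairwiseP d0 i2.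
  case: (ltngtP i j) => h.
  + exact: hp (ltn_ord i) (ltn_ord j) h.
  + rewrite disjoint_sym; exact: hp (ltn_ord j) (ltn_ord i) h.
  + by move/ord_inj: h => e; rewrite e eqxx in hij.
- by rewrite -i3 (big_nth d0) big_mkord.
- by move=> i; have [_ _ h3 h4] := i1 _ (mem_nth d0 (ltn_ord i)); split.
- move=> d hd x b hb.
  rewrite (card_nth _ d0 s (fun t => Rleb d (prob_in A t.1.1 x b))).
  have h1 := i4 d hd x b hb.
  have h2 := Phi_le_lnY _ _ hY (max_card [set y in [set: Y] | A x y == b]).
  set k := INR _ in h1 *.
  have -> : k = ((d * k) / d)%R by field; apply: Rgt_not_eq.
  rewrite /Rdiv; apply: Rmult_le_compat_r.
    by left; apply: Rinv_0_lt_compat.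
  exact: Rle_trans h1 h2.
Qed.
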